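(* Let $A\in\mathbb K^{n\times n}$ have rank at most $s$, let $G,H\in\mathbb K^{n\times t}$, set $M=A-GH^{T}$ and $r=s+t$. Let $S\subseteq\mathbb K$ be finite. Let $T_1\in\mathbb K^{n\times r}$ and $T_2\in\mathbb K^{r\times n}$ be Toeplitz matrices whose defining entries ($n+r-1$ for each) are chosen independently and uniformly at random from $S$. Let $P=AT_1-G(H^TT_1)$ and $Q=T_2A-(T_2G)H^T$. Then, with probability at least $1-2r/|S|$, the row rank profile of $P$ equals the row rank profile of $M$ and the column rank profile of $Q$ equals the column rank profile of $M$.
   Context: The row rank profile of a matrix $X$ is the increasing sequence of indices $i$ such that row $i$ of $X$ is not in the span of rows $1,\dots,i-1$ of $X$; the column rank profile is defined analogously with columns. A Toeplitz matrix $T$ is one with $T_{i,j}$ depending only on $i-j$; an $n\times r$ Toeplitz matrix is determined by $n+r-1$ entries. *)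

(* Defs.v *)
From HB Require Import structures.
From mathcomp Require Import all_boot all_order all_algebra.
Set Implicit Arguments. Unset Strict Implicit. Unset Printing Implicit Defensive.
Import Order.TTheory GRing.Theory Num.Theory.
Local Open Scope ring_scope.

Definition prev_rows (K : fieldType) (m n : nat) (X : 'M[K]_(m, n)) (i : nat)
  : 'M[K]_(m, n) :=
  \matrix_(j, k) (if (j < i)%N then X j k else 0).

Definition row_rank_profile (K : fieldType) (m n : nat) (X : 'M[K]_(m, n))
  : seq nat :=
  [seq val i | i <- enum 'I_m & ~~ (row i X <= prev_rows X i)%MS].

Definition col_rank_profile (K : fieldType) (m n : nat) (X : 'M[K]_(m, n))
  : seq nat := row_rank_profile X^T.

Definition toeplitz (K : Type) (m p : nat) (c : nat -> K) : 'M[K]_(m, p) :=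
  \matrix_(i, j) c (i + p - 1 - j)%N.

(* Random entries: an index vector into the finite sample set S (a seq). *)
Definition entries_of (K : Type) (x0 : K) (S : seq K) (N : nat)
  (f : {ffun 'I_N -> 'I_(size S)}) : nat -> K :=
  fun k => nth x0 S (if @insub _ (fun k => k < N)%N _ k is Some i then (f i : nat) else 0%N).
Arguments entries_of {K} x0 S {N} f k.

(* Main.v *)
Require Import Defs.
From HB Require Import structures.
From mathcomp Require Import all_boot all_order all_algebra.
From mathcomp Require Import zify ring lra.
Set Implicit Arguments. Unset Strict Implicit. Unset Printing Implicit Defensive.
Import Order.TTheory GRing.Theory Num.Theory.
Local Open Scope ring_scope.

Section Prof.
Variable K : fieldType.

Lemma prev_rowsM m n p (M : 'M[K]_(m, n)) (T : 'M[K]_(n, p)) i :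
  prev_rows (M *m T) i = prev_rows M i *m T.
Proof.
apply/matrixP=> j k; rewrite !mxE.
case: ifP => hj.
  by apply: eq_bigr => l _; rewrite mxE hj.
by rewrite big1 // => l _; rewrite mxE hj mul0r.
Qed.

Lemma prev_rows_sub m n (M : 'M[K]_(m, n)) i : (prev_rows M i <= M)%MS.
Proof.
apply/row_subP => j.
case hj: (j < i)%N.
  apply: (eq_row_sub j); apply/rowP => k; by rewrite !mxE hj.
have -> : row j (prev_rows M i) = 0 by apply/rowP => k; rewrite !mxE hj.
exact: sub0mx.
Qed.

Lemma inj_of_rank m n p (M : 'M[K]_(m, n)) (T : 'M[K]_(n, p)) (v : 'rV[K]_n) :
  \rank (M *m T) = \rank M -> (v <= M)%MS -> v *m T = 0 -> v = 0.
Proof.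
move=> hr hv hT.
have := mxrank_mul_ker M T; rewrite hr => /eqP.
rewrite -{2}[\rank M]addn0 eqn_add2l mxrank_eq0 => /eqP h0.
apply/eqP; rewrite -submx0 -h0 sub_capmx hv /=.
by apply/sub_kermxP.
Qed.

Lemma profile_mul m n p (M : 'M[K]_(m, n)) (T : 'M[K]_(n, p)) :
  \rank (M *m T) = \rank M -> row_rank_profile (M *m T) = row_rank_profile M.
Proof.
move=> hr; rewrite /row_rank_profile; congr (map _ _); apply: eq_filter => i /=.
congr negb; rewrite prev_rowsM row_mul; apply/idP/idP; last exact: submxMr.
case/submxP => D hD.
set v := row i M - D *m prev_rows M i.
have hv0 : v = 0.
  apply: (inj_of_rank hr).
    rewrite /v; apply: addmx_sub; first exact: row_sub.
    rewrite -mulNmx; apply: submx_trans (submxMl _ _) (prev_rows_sub _ _).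
  by rewrite /v mulmxBl hD mulmxA subrr.
have -> : row i M = D *m prev_rows M i by apply/eqP; rewrite -subr_eq0 -/v hv0.
exact: submxMl.
Qed.
End Prof.

Section Core.
Variable K : fieldType.

Definition Wm n p (c : nat -> K) : 'M[K]_(n, p) := \matrix_(i, j) c (i + j)%N.

Definition upd N m (f : {ffun 'I_N -> 'I_m}) k i :=
  [ffun j => if j == k then i else f j].

Lemma card_inj_k N m (k : 'I_N) (C : {set {ffun 'I_N -> 'I_m}}) :
  {in C &, forall f g : {ffun 'I_N -> 'I_m}, (forall j, j != k -> f j = g j) -> f = g} ->
  (#|C| * m <= #|{ffun 'I_N -> 'I_m}|)%N.
Proof.
move=> hC.
have -> : (#|C| * m = #|setX C [set: 'I_m]|)%N by rewrite cardsX cardsT card_ord.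
rewrite -(card_in_imset (f := fun p => upd p.1 k p.2)); first exact: max_card.
move=> [f i] [g i'] /setXP[hf _] /setXP[hg _] /= e.
move/ffunP: e => e.
have hi : i = i' by have := e k; rewrite !ffunE eqxx.
subst i'; congr pair; apply: hC => // j hj.
by have := e j; rewrite !ffunE (negbTE hj).
Qed.

Lemma rank_row' m n (X : 'M[K]_(m.+1, n)) i : (\rank X <= (\rank (row' i X)).+1)%N.
Proof.
have h : (X <= row' i X + row i X)%MS.
  apply/row_subP => j; case: (unliftP i j) => [j'|] ->.
    apply: (submx_trans _ (addsmxSl _ (row i X))).
    by apply: (eq_row_sub j'); apply/rowP => k; rewrite !mxE.
  exact: addsmxSr.
apply: leq_trans (mxrankS h) _.
apply: leq_trans (mxrank_adds_leqif _ _).1 _.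
by have := rank_leq_row (row i X); lia.
Qed.

Lemma rank_colsub m n p (g : 'I_p -> 'I_n) (X : 'M[K]_(m, n)) :
  (\rank (colsub g X) <= \rank X)%N.
Proof.
rewrite -mxrank_tr -[X in (_ <= X)%N]mxrank_tr; apply: mxrankS.
apply/row_subP => i; apply: (eq_row_sub (g i)); apply/rowP => k; by rewrite !mxE.
Qed.

Lemma rank_gen m n q rho (X : 'M[K]_(m, n)) (T : 'M[K]_(n, q)) (Bb : 'M[K]_(rho, n))
  (g : 'I_rho -> 'I_q) :
  (Bb <= X)%MS -> \rank X = rho -> \det (Bb *m colsub g T) != 0 ->
  \rank (X *m T) = \rank X.
Proof.
move=> hB hX hd; apply/eqP; rewrite eqn_leq mxrankM_maxl /=.
have : \rank (Bb *m colsub g T) = rho by apply: mxrank_unit; rewrite unitmxE unitfE.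
rewrite hX mulmx_colsub => <-.
apply: leq_trans (rank_colsub _ _) _.
by apply: mxrankS; apply: submxMr.
Qed.


Variable S : seq K.
Hypothesis hSu : uniq S.

Lemma entries_at N (f : {ffun 'I_N -> 'I_(size S)}) m (hm : (m < N)%N) :
  entries_of 0 S f m = nth 0 S (f (Ordinal hm)).
Proof.
rewrite /entries_of; case: insubP => [j _ hj|]; last by rewrite hm.
by congr (nth _ _ (nat_of_ord (f _))); apply: val_inj.
Qed.

Lemma entries_off N (f g : {ffun 'I_N -> 'I_(size S)}) (k : 'I_N) m :
  (forall j, j != k -> f j = g j) -> m != val k ->
  entries_of 0 S f m = entries_of 0 S g m.
Proof.
move=> hfg hm; rewrite /entries_of; case: insubP => [j _ hj|//].
rewrite hfg //; apply/eqP => e; move: hm; by rewrite -hj e eqxx.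
Qed.

Section Lin.
Variables (r' n' : nat) (B : 'M[K]_(r'.+1, n'.+1)).

Definition amat c : 'M[K]_(r'.+1) :=
  \matrix_(i, j) if j == ord_max then B i ord_max else (B *m Wm n'.+1 r'.+1 c) i j.

Variables (c1 c2 : nat -> K).
Hypothesis hc : forall m, m != (n' + r')%N -> c1 m = c2 m.

Lemma BW_off i (j : 'I_r'.+1) : j != ord_max ->
  (B *m Wm n'.+1 r'.+1 c1) i j = (B *m Wm n'.+1 r'.+1 c2) i j.
Proof.
move=> hj; rewrite !mxE; apply: eq_bigr => l _; rewrite !mxE hc //.
have hj' : (j < r')%N.
  have := ltn_ord j; move: hj; rewrite -(inj_eq val_inj) /=; lia.
have := ltn_ord l; lia.
Qed.

Lemma amat_off : amat c1 = amat c2.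
Proof.
apply/matrixP => i j; rewrite [LHS]mxE [RHS]mxE; case: ifP => hj //.
by apply: BW_off; rewrite hj.
Qed.

Lemma det_lin : \det (B *m Wm n'.+1 r'.+1 c1) =
  \det (B *m Wm n'.+1 r'.+1 c2) + (c1 (n' + r')%N - c2 (n' + r')%N) * \det (amat c2).
Proof.
rewrite -det_tr -[\det (B *m Wm _ _ c2)]det_tr -[\det (amat c2)]det_tr.
rewrite -[\det (B *m Wm _ _ c2)^T]mul1r.
apply: (determinant_multilinear (i0 := ord_max)).
- apply/rowP => j; rewrite !mxE eqxx mul1r !big_ord_recr /= !mxE.
  have -> : \sum_(i < n') B j (widen_ord (leqnSn n') i) * Wm n'.+1 r'.+1 c1 (widen_ord (leqnSn n') i) ord_max
    = \sum_(i < n') B j (widen_ord (leqnSn n') i) * Wm n'.+1 r'.+1 c2 (widen_ord (leqnSn n') i) ord_max.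
    apply: eq_bigr => l _; rewrite !mxE hc //=; have := ltn_ord l; lia.
  ring.
- apply/matrixP => i j; rewrite [LHS]mxE [RHS]mxE [LHS]mxE [RHS]mxE; symmetry.
  by apply: BW_off; rewrite eq_sym neq_lift.
- apply/matrixP => i j; rewrite [LHS]mxE [RHS]mxE [LHS]mxE [RHS]mxE [LHS]mxE.
  rewrite eq_sym (negbTE (neq_lift _ _)).
  by symmetry; apply: BW_off; rewrite eq_sym neq_lift.
Qed.
End Lin.

Lemma core : forall rho n N (B : 'M[K]_(rho, n)), \rank B = rho -> (n + rho <= N.+1)%N ->
  (#|[set f : {ffun 'I_N -> 'I_(size S)} |
      (\det (B *m Wm n rho (entries_of 0 S f)) == 0)%R]| * size S
   <= rho * #|{ffun 'I_N -> 'I_(size S)}|)%N.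
Proof.
elim=> [|r' IHr] n N B hB hN.
  rewrite mul0n leqn0 muln_eq0; apply/orP; left; rewrite cards_eq0; apply/eqP/setP => f.
  by rewrite !inE det_mx00 oner_eq0.
elim: n B hB hN => [|n' IHn] B hB hN.
  by have := rank_leq_col B; rewrite hB.
set u := col ord_max B.
have [hu|hu] := eqVneq u 0.
  pose B' := \matrix_(i < r'.+1, j < n') B i (widen_ord (leqnSn n') j).
  have hBl i : B i ord_max = 0 by move/matrixP: hu => /(_ i 0); rewrite !mxE.
  have hBW c : B *m Wm n'.+1 r'.+1 c = B' *m Wm n' r'.+1 c.
    apply/matrixP => i j; rewrite !mxE big_ord_recr /= hBl mul0r addr0.
    by apply: eq_bigr => l _; rewrite !mxE.
  have hB' : \rank B' = r'.+1.
    apply/eqP; rewrite eqn_leq rank_leq_row /= -{1}hB.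
    have -> : B = B' *m (\matrix_(j, l) ((j : nat) == l)%:R : 'M[K]_(n', n'.+1)).
      apply/matrixP => i l; rewrite !mxE.
      case: (unliftP ord_max l) => [l'|] ->.
        have hv : (lift (@ord_max n') l' : nat) = l' by rewrite /= /bump leqNgt ltn_ord.
        rewrite (bigD1 l') //= !mxE hv eqxx mulr1 big1 ?addr0.
          by f_equal; apply: val_inj; exact: hv.
        move=> j hj; rewrite !mxE hv.
        have -> : ((j : nat) == l') = false.
          by apply/negbTE; move: hj; rewrite -(inj_eq val_inj).
        by rewrite mulr0.
      rewrite hBl big1 // => j _; rewrite !mxE.
      have -> : ((j : nat) == @ord_max n') = false by rewrite /= ltn_eqF.
      by rewrite mulr0.
    exact: mxrankM_maxl.
  have := IHn B' hB' (ltac:(lia)).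
  apply: leq_trans; rewrite leq_mul2r; apply/orP; right; apply: subset_leq_card.
  by apply/subsetP => f; rewrite !inE hBW.
have hru : \rank u = 1%N.
  by apply/eqP; rewrite eqn_leq rank_leq_col lt0n mxrank_eq0 hu.
pose L := col_ebase u; pose E := invmx L; pose Ru := row_ebase u; pose s := Ru 0 0.
have hL : L \in unitmx := col_ebase_unit u.
have hE : E \in unitmx by rewrite unitmx_inv.
have hs : s != 0 by have := row_ebase_unit u; rewrite unitmxE det_mx11 unitfE.
have hEu : E *m u = pid_mx 1 *m Ru.
  by rewrite -{1}(mulmx_ebase u) hru /E -!mulmxA mulKmx.
pose B'' := row' 0 (E *m B).
have hB'' : \rank B'' = r'.
  have h1 : \rank (E *m B) = r'.+1.
    have h1a := mxrankM_maxr E B.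
    have h1b : (\rank B <= \rank (E *m B))%N.
      have {1}-> : B = invmx E *m (E *m B) by rewrite mulKmx.
      exact: mxrankM_maxr.
    apply/eqP; rewrite eqn_leq; apply/andP; split.
      exact: leq_trans h1a (eq_leq hB).
    exact: leq_trans (eq_leq (esym hB)) h1b.
  apply/eqP; rewrite eqn_leq rank_leq_row /=.
  by have := rank_row' (E *m B) 0; rewrite h1.
have key c : \det (amat B c) = 0 -> \det (B'' *m Wm n'.+1 r' c) = 0.
  move=> h0.
  have hEA : E *m amat B c = \matrix_(i, j) if j == ord_max then (pid_mx 1 *m Ru) i 0
                 else ((E *m B) *m Wm n'.+1 r'.+1 c) i j.
    apply/matrixP => i j; rewrite [RHS]mxE; case: ifP => hj.
      rewrite -hEu !mxE; apply: eq_bigr => l _; by rewrite !mxE hj.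
    rewrite -mulmxA !mxE; apply: eq_bigr => l _; by rewrite [amat _ _ _ _]mxE hj.
  have hd : \det (E *m amat B c) = s * ((-1) ^+ (0 + r') * \det (B'' *m Wm n'.+1 r' c)).
    rewrite (expand_det_col _ ord_max) (bigD1 0) //= big1 ?addr0.
      congr (_ * _).
        by rewrite hEA !mxE eqxx big_ord1 mxE /= mul1r.
      rewrite /cofactor; congr (_ * \det _).
      apply/matrixP => i j; rewrite hEA !mxE.
      rewrite eq_sym (negbTE (neq_lift _ _)); apply: eq_bigr => l _; by rewrite !mxE lift_max.
    move=> i hi; rewrite hEA !mxE eqxx big_ord1 mxE.
    have -> : ((i : nat) == 0%N) = false by move: hi; rewrite -(inj_eq val_inj) => /negbTE.
    by rewrite !mul0r.
  move: hd; rewrite det_mulmx h0 mulr0 => /esym/eqP.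
  by rewrite !mulf_eq0 (negbTE hs) signr_eq0 /= => /eqP.
set bad := [set f : {ffun 'I_N -> 'I_(size S)} | \det (B *m Wm n'.+1 r'.+1 (entries_of 0 S f)) == 0].
set bad2 := [set f : {ffun 'I_N -> 'I_(size S)} | \det (B'' *m Wm n'.+1 r' (entries_of 0 S f)) == 0].
set C := [set f : {ffun 'I_N -> 'I_(size S)} | (\det (amat B (entries_of 0 S f)) != 0)
           && (\det (B *m Wm n'.+1 r'.+1 (entries_of 0 S f)) == 0)].
have hsub : bad \subset bad2 :|: C.
  apply/subsetP => f; rewrite !inE => hf; rewrite hf andbT.
  have [/key ->|_] := eqVneq (\det (amat B (entries_of 0 S f))) 0; first by rewrite eqxx.
  by rewrite orbT.
have hC : (#|C| * size S <= #|{ffun 'I_N -> 'I_(size S)}|)%N.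
  have hk : (n' + r' < N)%N by lia.
  apply: (card_inj_k (k := Ordinal hk)) => f1 g1; rewrite !inE => /andP[ha hf] /andP[_ hg] hfg.
  have hc m : m != (n' + r')%N -> entries_of 0 S f1 m = entries_of 0 S g1 m.
    by move=> hm; apply: (entries_off (k := Ordinal hk)).
  have := det_lin B hc; rewrite (eqP hf) (eqP hg) add0r => /esym/eqP.
  rewrite mulf_eq0 -(amat_off B hc) (negbTE ha) orbF subr_eq0.
  rewrite !(entries_at _ hk) => /eqP e.
  have efg : f1 (Ordinal hk) = g1 (Ordinal hk).
    by apply/val_inj/eqP; rewrite -(nth_uniq 0 _ _ hSu) ?ltn_ord ?e.
  apply/ffunP => j; case: (eqVneq j (Ordinal hk)) => [->|hj] //; exact: hfg.
have h2 := IHr n'.+1 N B'' hB'' (ltac:(lia)).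
apply: leq_trans (leq_mul (subset_leq_card hsub) (leqnn _)) _.
apply: leq_trans (leq_mul (leq_card_setU _ _) (leqnn _)) _.
rewrite mulnDl mulSn addnC; exact: leq_add.
Qed.

End Core.

Lemma fin_ineq (a g b1 b2 r s : rat) : 0 < s -> 0 < a -> 0 <= b1 -> 0 <= b2 ->
  b1 * s <= r * a -> b2 * s <= r * a -> a * a <= g + a * b1 + a * b2 ->
  1 - (2 * r) / s <= g / (a * a).
Proof.
move=> hs ha hb1 hb2 h1 h2 h.
rewrite ler_pdivlMr ?mulr_gt0 //.
have e1 : a * b1 * s <= a * (r * a) by rewrite -mulrA; apply: ler_wpM2l => //; exact: ltW.
have e2 : a * b2 * s <= a * (r * a) by rewrite -mulrA; apply: ler_wpM2l => //; exact: ltW.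
have E : (1 - 2 * r / s) * (a * a) * s = a*a*s - 2 * (a * (r*a)) by field; rewrite ?gt_eqF.
rewrite -(ler_pM2r hs) E.
have h' : a*a*s <= (g + a*b1 + a*b2) * s by rewrite ler_pM2r.
rewrite !mulrDl in h'.
lra.
Qed.

Theorem mainTheorem4 (K : fieldType) (n s t : nat)
  (A : 'M[K]_n) (G H : 'M[K]_(n, t)) (S : seq K)
  (hA : (\rank A <= s)%N) (hSu : uniq S) (hS0 : (0 < size S)%N) :
  let r := (s + t)%N in
  let M := A - G *m H^T in
  let good :=
    [set cd : {ffun 'I_(n + r - 1) -> 'I_(size S)} *
              {ffun 'I_(n + r - 1) -> 'I_(size S)} |
      let T1 : 'M[K]_(n, r) := toeplitz n r (entries_of 0 S cd.1) in
      let T2 : 'M[K]_(r, n) := toeplitz r n (entries_of 0 S cd.2) in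
      let P := A *m T1 - G *m (H^T *m T1) in
      let Q := T2 *m A - (T2 *m G) *m H^T in
      (row_rank_profile P == row_rank_profile M) &&
      (col_rank_profile Q == col_rank_profile M)] in
  1 - (2 * r)%:R / (size S)%:R
    <= (#|good|%:R / #|[set: {ffun 'I_(n + r - 1) -> 'I_(size S)} *
                             {ffun 'I_(n + r - 1) -> 'I_(size S)}]|%:R : rat).
Proof.
cbv zeta.
set r := (s + t)%N.
set M := A - G *m H^T.
set good := [set cd | _].
have hrM : (\rank M <= r)%N.
  have -> : M = A + (- G) *m H^T by rewrite mulNmx.
  apply: leq_trans (mxrank_add _ _) _.
  apply: leq_add => //; apply: leq_trans (mxrankM_maxl _ _) _; exact: rank_leq_col.
have hrMT : \rank M^T = \rank M by rewrite mxrank_tr.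
set N := (n + r - 1)%N.
have hN : (n + \rank M <= N.+1)%N by rewrite /N; lia.
have hNT : (n + \rank M^T <= N.+1)%N by rewrite hrMT.
pose B1 := row_base M.
have hB1 : \rank B1 = \rank M by apply/eqP; exact: row_base_free.
pose sr := perm.perm (@rev_ord_inj n).
pose B2 := row_base M^T *m perm_mx sr.
have hB2 : \rank B2 = \rank M^T.
  rewrite /B2 mxrankMfree; first by apply/eqP; exact: row_base_free.
  by rewrite row_free_unit unitmx_perm.
set bad1 := [set f : {ffun 'I_N -> 'I_(size S)} |
      (\det (B1 *m Wm n (\rank M) (entries_of 0 S f)) == 0)].
set bad2 := [set f : {ffun 'I_N -> 'I_(size S)} |
      (\det (B2 *m Wm n (\rank M^T) (entries_of 0 S f)) == 0)].
have hb1 := core hSu hB1 hN.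
have hb2 := core hSu hB2 hNT.
have hsub : setX (~: bad1) (~: bad2) \subset good.
  apply/subsetP => [[f1 f2]] /setXP[]; rewrite !inE /= => h1 h2.
  apply/andP; split.
    rewrite mulmxA -mulmxBl; apply/eqP; apply: profile_mul.
    have hg (k : 'I_(\rank M)) : (r - 1 - k < r)%N by have := ltn_ord k; lia.
    apply: (rank_gen (Bb := B1) (g := fun k => Ordinal (hg k))) => //.
      by rewrite /B1 eq_row_base.
    have -> : colsub (fun k => Ordinal (hg k)) (toeplitz n r (entries_of 0 S f1))
              = Wm n (\rank M) (entries_of 0 S f1).
      apply/matrixP => i k; rewrite !mxE /=; congr entries_of.
      have := ltn_ord k; lia.
    exact: h1.
  rewrite /col_rank_profile -mulmxA -mulmxBr trmx_mul; apply/eqP; apply: profile_mul.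
  have hg (k : 'I_(\rank M^T)) : (k < r)%N by have := ltn_ord k; lia.
  apply: (rank_gen (Bb := row_base M^T) (g := fun k => Ordinal (hg k))) => //.
    by rewrite eq_row_base.
  have -> : colsub (fun k => Ordinal (hg k)) (toeplitz r n (entries_of 0 S f2))^T
            = perm_mx sr *m Wm n (\rank M^T) (entries_of 0 S f2).
    rewrite -row_permE; apply/matrixP => i k; rewrite !mxE /= perm.permE /=.
    congr entries_of; have := ltn_ord i; lia.
  by rewrite mulmxA.
have hall : (0 < #|{ffun 'I_N -> 'I_(size S)}|)%N.
  by rewrite card_ffun card_ord expn_gt0 hS0.
set a := #|{ffun 'I_N -> 'I_(size S)}| in hb1 hb2 hall.
have hg : (a * a <= #|good| + a * #|bad1| + a * #|bad2|)%N.
  have := subset_leq_card hsub; rewrite cardsX.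
  have c1 := cardsC bad1; have c2 := cardsC bad2.
  rewrite -/a in c1 c2.
  clearbody a; move=> h; move: c1 c2 h.
  move: #|bad1| #|~: bad1| #|bad2| #|~: bad2| #|good| => x1 y1 x2 y2 g <- e h.
  nia.
rewrite cardsT card_prod -/a !natrM.
apply: (fin_ineq (r := r%:R) (b1 := #|bad1|%:R) (b2 := #|bad2|%:R)).
- by rewrite ltr0n.
- by rewrite ltr0n.
- exact: ler0n.
- exact: ler0n.
- rewrite -natrM -natrM ler_nat; apply: leq_trans hb1 _; exact: leq_mul.
- rewrite -natrM -natrM ler_nat; apply: leq_trans hb2 _; rewrite hrMT; exact: leq_mul.
- by rewrite -!natrM -!natrD ler_nat.
Qed.
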